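(* Let $G$ be a finite group of odd order. Then $\mathrm{cp}(G)\geq\lambda_3(G)^2$.
   Context: For an integer $e$ and a finite group $G$, $\lambda_e(G)$ denotes the maximum over all automorphisms $\alpha$ of $G$ of $|\{g\in G:\alpha(g)=g^e\}|/|G|$. $\mathrm{cp}(G)$ denotes the commuting probability of $G$, i.e. $|\{(x,y)\in G^2: xy=yx\}|/|G|^2$. *)

(* Defs.v *)
From HB Require Import structures.
From mathcomp Require Import all_boot all_order all_algebra all_fingroup all_solvable.
Set Implicit Arguments. Unset Strict Implicit. Unset Printing Implicit Defensive.
Import Order.TTheory GRing.Theory Num.Theory.
Local Open Scope ring_scope.

(* Automorphisms of G are elements of Aut G : {set {perm gT}} (permutations of
   gT that restrict to automorphisms of G and fix everything outside G). *)

Definition gpowz (gT : finGroupType) (g : gT) (e : int) : gT :=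
  match e with
  | Posz n => (g ^+ n)%g
  | Negz n => ((g ^+ n.+1)^-1)%g
  end.

Definition fixpow_count (gT : finGroupType) (G : {set gT}) (e : int)
    (a : {perm gT}) : nat :=
  #|[set g in G | a g == gpowz g e]|.

Definition lambda (gT : finGroupType) (G : {group gT}) (e : int) : rat :=
  \big[Num.max/0]_(a in Aut G) ((fixpow_count G e a)%:R / (#|G|)%:R : rat).

Definition cp (gT : finGroupType) (G : {group gT}) : rat :=
  (#|[set xy in setX G G | (xy.1 * xy.2 == xy.2 * xy.1)%g]|)%:R / ((#|G| ^ 2)%N)%:R.

(* Main.v *)
Require Import Defs.
From HB Require Import structures.
From mathcomp Require Import all_boot all_order all_algebra all_fingroup all_solvable.
From mathcomp Require Import zify.
Import Order.TTheory GRing.Theory Num.Theory.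

Set Implicit Arguments. Unset Strict Implicit. Unset Printing Implicit Defensive.

Local Open Scope group_scope.

Definition Sset (gT : finGroupType) (G : {group gT}) (a : {perm gT}) : {set gT} :=
  [set g in G | a g == g ^+ 3].
Definition Fset (gT : finGroupType) (G : {group gT}) (a : {perm gT}) : {set gT} :=
  [set g in G | a g == g].
Definition cen (gT : finGroupType) (G : {group gT}) (x : gT) : {set gT} :=
  [set c in G | x * c == c * x].
Definition Tset (gT : finGroupType) (G : {group gT}) (a : {perm gT}) (x : gT) : {set gT} :=
  [set g in G | x ^ g \in Sset G a].

Lemma aM (gT : finGroupType) (G : {group gT}) (a : {perm gT}) (Aa : a \in Aut G) x y :
  x \in G -> y \in G -> a (x * y) = a x * a y.
Proof. by move=> xG yG; rewrite -(autmE Aa) morphM. Qed.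

Lemma aV (gT : finGroupType) (G : {group gT}) (a : {perm gT}) (Aa : a \in Aut G) x :
  x \in G -> a (x^-1) = (a x)^-1.
Proof. by move=> xG; rewrite -(autmE Aa) morphV. Qed.

Lemma aX (gT : finGroupType) (G : {group gT}) (a : {perm gT}) (Aa : a \in Aut G) x n :
  x \in G -> a (x ^+ n) = (a x) ^+ n.
Proof. by move=> xG; rewrite -(autmE Aa) morphX. Qed.

Lemma aJ (gT : finGroupType) (G : {group gT}) (a : {perm gT}) (Aa : a \in Aut G) x y :
  x \in G -> y \in G -> a (x ^ y) = (a x) ^ (a y).
Proof. by move=> xG yG; rewrite -(autmE Aa) morphJ. Qed.

Lemma sq_inj (gT : finGroupType) (G : {group gT}) (oG : odd #|G|) y y' :
  y \in G -> y' \in G -> y ^+ 2 = y' ^+ 2 -> y = y'.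
Proof.
have E : forall z, z \in G -> (z ^+ 2) ^+ (#|G|./2).+1 = z.
  move=> z zG; rewrite -expgM.
  have -> : (2 * (#|G|./2).+1 = #|G| + 1)%N.
    by rewrite -{2}(odd_double_half #|G|) oG -muln2; lia.
  by rewrite expgD expg_cardG // mul1g expg1.
by move=> yG y'G H; rewrite -(E _ yG) H E.
Qed.

Lemma SF (gT : finGroupType) (G : {group gT}) (a : {perm gT}) (Aa : a \in Aut G)
  (oG : odd #|G|) : (#|Sset G a| * #|Fset G a| <= #|G|)%N.
Proof.
rewrite -cardsX -(@card_in_imset _ _ (fun p => p.2 * p.1)).
  apply: subset_leq_card; apply/subsetP => z /imsetP [[y f]].
  by rewrite !inE /= => /andP [/andP [yG _] /andP [fG _]] ->; rewrite groupM.
move=> [y f] [y' f']; rewrite !inE /= => /andP [/andP [yG Hy] /andP [fG Hf]].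
move=> /andP [/andP [y'G Hy'] /andP [f'G Hf']] E.
have key : forall u v, u \in G -> v \in G -> a u = u -> a v = v ^+ 3 ->
    (u * v)^-1 * a (u * v) = v ^+ 2.
  move=> u v uG vG Hu Hv; rewrite (aM Aa) // Hu Hv invMg -mulgA (mulgA u^-1) mulVg mul1g.
  by rewrite (expgS v 2) mulKg.
have E2 : y ^+ 2 = y' ^+ 2.
  rewrite -(key f y) ?(eqP Hf) ?(eqP Hy) // E.
  by rewrite (key f' y') ?(eqP Hf') ?(eqP Hy').
have Ey := sq_inj oG yG y'G E2.
subst y'; move: E => /= /mulIg ->; done.
Qed.

Lemma fiber (gT : finGroupType) (G : {group gT}) (a : {perm gT}) (Aa : a \in Aut G)
  (D : {set gT}) : (#|[set h in G | (h * (a h)^-1)%g \in D]| <= #|Fset G a| * #|D|)%N.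
Proof.
rewrite -sum1_card (partition_big (fun h => h * (a h)^-1) (mem D)); last first.
  by move=> h; rewrite inE => /andP [].
rewrite mulnC -sum_nat_const; apply: leq_sum => d dD.
rewrite sum1dep_card.
set B := [set _ | _].
have [->|/set0Pn [h0 h0B]] := eqVneq B set0; first by rewrite cards0.
rewrite -(card_lcoset (Fset G a) h0); apply: subset_leq_card; apply/subsetP => h.
move: h0B; rewrite !inE => /andP [/andP [h0G _] /eqP E0] /andP [/andP [hG _] /eqP E].
rewrite mem_lcoset !inE groupM ?groupV //=.
rewrite (aM Aa) ?groupV // (aV Aa) //.
have : h0^-1 * (h * (a h)^-1) * a h = h0^-1 * (h0 * (a h0)^-1) * a h by rewrite E E0.
by rewrite -mulgA mulgKV mulKg => ->.
Qed.

Lemma censize (gT : finGroupType) (G : {group gT}) (a : {perm gT}) (Aa : a \in Aut G) s :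
  s \in Sset G a -> (#|cen G (s ^+ 3)| <= #|cen G s|)%N.
Proof.
rewrite inE => /andP [sG /eqP Hs].
have AaV : a^-1 \in Aut G by rewrite groupV.
rewrite -(@card_in_imset _ _ (fun c => (a^-1)%g c)); last by move=> ? ? _ _; apply: perm_inj.
apply: subset_leq_card; apply/subsetP => z /imsetP [c]; rewrite !inE => /andP [cG /eqP Hc] ->.
rewrite Aut_closed //=; apply/eqP; apply: (@perm_inj _ a).
by rewrite !(aM Aa) ?Aut_closed // permKV Hs.
Qed.

Lemma Tbound (gT : finGroupType) (G : {group gT}) (a : {perm gT}) (Aa : a \in Aut G) s :
  s \in Sset G a -> (#|Tset G a s| <= #|Fset G a| * #|cen G s|)%N.
Proof.
move=> sS; have := sS; rewrite inE => /andP [sG /eqP Hs].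
apply: leq_trans (leq_mul (leqnn _) (censize Aa sS)).
apply: leq_trans (fiber Aa (cen G (s ^+ 3))).
apply: subset_leq_card; apply/subsetP => h; rewrite !inE => /andP [hG /andP [_ /eqP E]].
rewrite hG /= groupM ?groupV ?Aut_closed //=.
move: E; rewrite (aJ Aa) // Hs -conjXg => E.
have F : s ^+ 3 ^ (h * (a h)^-1)^-1 = s ^+ 3.
  by rewrite invMg invgK conjgM E conjgK.
apply/eqP; rewrite conjgC.
by rewrite -{1}F conjgKV.
Qed.

Lemma transport (gT : finGroupType) (G : {group gT}) (a : {perm gT}) (Aa : a \in Aut G)
  (oG : odd #|G|) x : x \in G ->
  (#|Sset G a| * #|Tset G a x| <= #|G| * #|cen G x|)%N.
Proof.
move=> xG.
have [->|/set0Pn [g0 g0T]] := eqVneq (Tset G a x) set0; first by rewrite cards0 muln0.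
have := g0T; rewrite inE => /andP [g0G sS].
have ET : Tset G a x = g0 *: Tset G a (x ^ g0).
  apply/setP => g; rewrite mem_lcoset !inE -conjgM mulKVg.
  by rewrite (groupMl g (groupVr g0G)).
have EC : cen G (x ^ g0) = cen G x :^ g0.
  apply/setP => c; rewrite mem_conjg !inE groupJr ?groupV //.
  congr (_ && _).
  by rewrite -[LHS](inj_eq (@conjg_inj _ g0^-1)) (conjMg (x ^ g0)) (conjMg c) conjgK.
rewrite ET card_lcoset -(cardJg (cen G x) g0) -EC.
apply: leq_trans (leq_mul (leqnn _) (Tbound Aa sS)) _.
by rewrite mulnA leq_mul2r SF ?orbT.
Qed.

Lemma sumT (gT : finGroupType) (G : {group gT}) (a : {perm gT}) :
  (\sum_(x in G) #|Tset G a x| = #|G| * #|Sset G a|)%N.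
Proof.
have SG : Sset G a \subset G by apply/subsetP => z; rewrite inE => /andP [].
transitivity (\sum_(x in G) \sum_(g in G) (((x ^ g)%g \in Sset G a) : nat))%N.
  apply: eq_bigr => x _.
  rewrite -sum1_card big_mkcond [RHS]big_mkcond /=; apply: eq_bigr => g _.
  by rewrite inE; case: (g \in G); case: (x ^ g \in Sset G a).
rewrite exchange_big /= -sum_nat_const; apply: eq_bigr => g gG.
rewrite -(cardJg (Sset G a) g^-1) -sum1_card big_mkcond [RHS]big_mkcond /=.
apply: eq_bigr => x _; rewrite mem_conjgV.
case xS: (x ^ g \in Sset G a); last by case: (x \in G).
have: x ^ g \in G by apply: (subsetP SG).
by rewrite groupJr // => ->.
Qed.

Lemma comm_sum (gT : finGroupType) (G : {group gT}) :
  #|[set xy in setX G G | (xy.1 * xy.2 == xy.2 * xy.1)%g]| = (\sum_(x in G) #|cen G x|)%N.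
Proof.
rewrite -sum1_card.
transitivity (\sum_(x in G) \sum_(c | (c \in G) && (x * c == c * x)%g) 1)%N; last first.
  by apply: eq_bigr => x _; rewrite sum1dep_card; apply: eq_card => c; rewrite !inE.
rewrite pair_big_dep; apply: eq_bigl => [[x c]]; rewrite !inE /=.
by rewrite andbA.
Qed.

Lemma main_nat (gT : finGroupType) (G : {group gT}) (a : {perm gT}) (Aa : a \in Aut G)
  (oG : odd #|G|) :
  (#|Sset G a| ^ 2 <= #|[set xy in setX G G | (xy.1 * xy.2 == xy.2 * xy.1)%g]|)%N.
Proof.
rewrite comm_sum -(@leq_pmul2l #|G|) ?cardG_gt0 //.
rewrite expnS expn1 mulnA (mulnC #|G|) -mulnA -sumT big_distrr big_distrr /=.
apply: leq_sum => x xG; exact: transport.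
Qed.

Local Close Scope group_scope.
Local Open Scope ring_scope.

Lemma cp_ge0 (gT : finGroupType) (G : {group gT}) : 0 <= cp G.
Proof. by rewrite /cp divr_ge0 ?ler0n. Qed.

Lemma per_aut (gT : finGroupType) (G : {group gT}) (a : {perm gT}) (Aa : a \in Aut G)
  (oG : odd #|G|) :
  ((fixpow_count G 3 a)%:R / (#|G|)%:R : rat) ^+ 2 <= cp G.
Proof.
have -> : fixpow_count G 3 a = #|Sset G a| by [].
rewrite /cp expr_div_n -!natrX.
apply: ler_wpM2r; first by rewrite invr_ge0 ler0n.
by rewrite ler_nat; apply: main_nat.
Qed.

Theorem proposition7 (gT : finGroupType) (G : {group gT}) :
  odd #|G| -> lambda G 3 ^+ 2 <= cp G.
Proof.
move=> oG; rewrite /lambda.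
set P := fun v : rat => (0 <= v) && (v ^+ 2 <= cp G).
suff /andP [] : P (\big[Num.max/0]_(a in Aut G)
    ((fixpow_count G 3 a)%:R / (#|G|)%:R : rat)) by [].
apply: (big_ind P).
- by rewrite /P lexx expr0n /= cp_ge0.
- move=> x y /andP [x0 Hx] /andP [y0 Hy].
  by case: (lerP x y) => _; rewrite /P ?x0 ?y0.
- move=> a Aa; rewrite /P per_aut // andbT.
  by rewrite divr_ge0 ?ler0n.
Qed.
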